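(* Let $n \ge 1$ and $A, B \in \mathrm{SPD}(n)$. Let $\Phi:\mathrm{SPD}(n)\to \mathbf{S}^\infty$ be the map defined in the context, and set $\widetilde f = \Phi(A)$, $\widetilde g = \Phi(B)$. Then $$ d(2A, 2B) = d_S(\widetilde f, \widetilde g), $$ where $d$ is the Stein metric on $\mathrm{SPD}(n)$ and $d_S$ is the function on $\mathbf{S}^\infty$ defined in the context. In other words, $A \mapsto \Phi(A/2)$ is an isometry from $(\mathrm{SPD}(n), d)$ onto its image in $(\mathbf{S}^\infty, d_S)$.
   Context: $\mathrm{SPD}(n)$ denotes the set of $n\times n$ real symmetric positive definite matrices. The Stein metric on $\mathrm{SPD}(n)$ is $$ d(A,B) = \sqrt{\log\det\!\Big(\tfrac{A+B}{2}\Big) - \tfrac12 \log\det(AB)}. $$ For $A \in \mathrm{SPD}(n)$, let $f_A:\mathbb{R}^n\to\mathbb{R}$ be the density of the Gaussian distribution with mean $\mathbf{0}$ and covariance matrix $A$, viewed as an element of $L^2(\mathbb{R}^n)$. Let $\mathbf{S}^\infty$ denote the unit sphere of $L^2(\mathbb{R}^n)$, and define $\Phi(A) = f_A/\|f_A\|_{L^2}$. For $\widetilde f, \widetilde g \in \mathbf{S}^\infty$ with $\langle \widetilde f, \widetilde g\rangle \neq 0$ define $$ d_S(\widetilde f, \widetilde g) = \sqrt{-\log \langle \widetilde f, \widetilde g\rangle^2}, $$ where $\langle\cdot,\cdot\rangle$ is the $L^2$ inner product. *)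

(* Defs.v *)
From Stdlib Require Import Reals Lra.
Open Scope R_scope.

(* Real n x n matrices are represented as functions nat -> nat -> R, of which
   only the entries with indices < n are relevant; vectors of R^n as nat -> R. *)
Definition Mat := nat -> nat -> R.
Definition Vec := nat -> R.

Fixpoint rsum (n : nat) (f : nat -> R) : R :=
  match n with O => 0 | S m => rsum m f + f m end.

Definition minor0 (A : Mat) (j : nat) : Mat :=
  fun i k => A (S i) (if (k <? j)%nat then k else S k).

Fixpoint det (n : nat) (A : Mat) : R :=
  match n with
  | O => 1
  | S m => rsum (S m) (fun j => (-1) ^ j * A O j * det m (minor0 A j))
  end.

Definition madd (A B : Mat) : Mat := fun i j => A i j + B i j.
Definition mscale (c : R) (A : Mat) : Mat := fun i j => c * A i j.

Definition quad (n : nat) (A : Mat) (x : Vec) : R :=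
  rsum n (fun i => rsum n (fun j => x i * A i j * x j)).

Definition SPD (n : nat) (A : Mat) : Prop :=
  (forall i j, (i < n)%nat -> (j < n)%nat -> A i j = A j i) /\
  (forall x : Vec, (exists i, (i < n)%nat /\ x i <> 0) -> 0 < quad n A x).

Definition is_inverse (n : nat) (A Ainv : Mat) : Prop :=
  forall i j, (i < n)%nat -> (j < n)%nat ->
    rsum n (fun k => A i k * Ainv k j) = if Nat.eqb i j then 1 else 0.

Definition stein (n : nat) (A B : Mat) : R :=
  sqrt (ln (det n (mscale (/2) (madd A B))) - / 2 * ln (det n A * det n B)).

(* Gaussian density with mean 0 and covariance A (Ainv = A^{-1}) *)
Definition gauss (n : nat) (A Ainv : Mat) (x : Vec) : R :=
  exp (- / 2 * quad n Ainv x) / sqrt ((2 * PI) ^ n * det n A).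

Definition improper_integral (f : R -> R) (l : R) : Prop :=
  (forall a b : R, inhabited (Riemann_integrable f a b)) /\
  (forall eps : R, 0 < eps -> exists M : R, forall a b : R,
      a <= - M -> M <= b -> forall pr : Riemann_integrable f a b,
      Rabs (RiemannInt pr - l) < eps).

Definition vcons (t : R) (y : Vec) : Vec :=
  fun i => match i with O => t | S k => y k end.

(* integral_Rn n F l : the (iterated improper Riemann) integral of F over R^n
   exists and equals l. *)
Fixpoint integral_Rn (n : nat) (F : Vec -> R) (l : R) : Prop :=
  match n with
  | O => l = F (fun _ => 0)
  | S m => exists G : R -> R,
      (forall t, integral_Rn m (fun y => F (vcons t y)) (G t)) /\
      improper_integral G l
  end.

(* d_S on the unit sphere, in terms of the inner product ip = <f~, g~> *)
Definition dS_of_inner (ip : R) : R := sqrt (- ln (ip ^ 2)).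

(* Main.v *)
Require Import Defs.
From Stdlib Require Import Reals Lra Lia FunctionalExtensionality.
Open Scope R_scope.
Module LA.
From mathcomp Require Import all_boot all_order all_algebra.
From mathcomp Require Import Rstruct.
Import GRing.Theory Num.Theory.

Definition mx n (A : Mat) : 'M[R]_n := \matrix_(i < n, j < n) A i j.

Lemma rsumE n f : rsum n f = (\sum_(i < n) f i)%R.
Proof.
elim: n => [|n IH] /=; first by rewrite big_ord0.
by rewrite big_ord_recr /= IH.
Qed.

Lemma minor0E (j k : nat) : (if (k <? j)%nat then k else S k) = bump j k.
Proof.
rewrite /bump. case: (Nat.ltb_spec k j) => H.
- have -> : (j <= k)%N = false by apply/negbTE; rewrite -ltnNge; apply/ltP.
  by [].
- have -> : (j <= k)%N = true by apply/leP.
  by [].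
Qed.

Lemma det_mxE n A : det n A = (\det (mx n A))%R.
Proof.
elim: n A => [|n IH] A; first by rewrite /= det_mx00.
change (rsum n.+1 (fun j => (-1) ^ j * A O j * det n (minor0 A j)) = (\det (mx n.+1 A))%R).
rewrite (expand_det_row _ ord0) rsumE.
apply: eq_bigr => j _.
rewrite IH /cofactor RpowE !mxE /= add0n.
rewrite !RmultE mulrA.
have -> : (-1 : R) = (- 1)%R by reflexivity.
congr (_ * _)%R; first by rewrite mulrC.
f_equal; apply/matrixP => i k; rewrite !mxE /minor0 minor0E.
by [].
Qed.

Lemma lift0_neq (m : nat) (k : 'I_m) : (lift ord0 k == ord0) = false.
Proof. by apply/negbTE; rewrite eq_sym neq_lift. Qed.

Lemma schur_mx m (M : Mat) (w : Vec) :
 (forall i, lt i m -> rsum m (fun k => M (S i) (S k) * w k) = M (S i) O) ->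
 det (S m) M = (M O O - rsum m (fun k => M O (S k) * w k)) * det m (fun i j => M (S i) (S j)).
Proof.
move=> Hw; rewrite !det_mxE.
set N := mx m.+1 M.
pose E : 'M[R]_m.+1 := (\matrix_(i, j) (if (j == ord0) && (i != ord0) then w i.-1 else 0))%R.
have detP : (\det (1%:M - E) = 1)%R.
  rewrite (expand_det_row _ ord0) big_ord_recl big1 ?addr0.
  - rewrite /cofactor !mxE /= subr0 expr0 !mul1r.
    rewrite -[RHS](det1 R m); congr (determinant _); apply/matrixP => i j; rewrite !mxE.
    by rewrite (inj_eq lift_inj) lift0_neq subr0.
  - move=> j _; rewrite !mxE lift0_neq eq_sym lift0_neq /=.
    by rewrite subr0 mul0r.
have NE0 : forall i, ((N *m E) i ord0 = \sum_(k<m) M i (S k) * w k)%R.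
  move=> i; rewrite !mxE big_ord_recl !mxE eqxx /= mulr0 add0r.
  apply: eq_bigr => k _; rewrite !mxE eqxx lift0_neq /= /bump add1n add0n.
  by [].
have NEl : forall i (j : 'I_m), ((N *m E) i (lift ord0 j) = 0)%R.
  move=> i j; rewrite !mxE big1 // => k _; rewrite !mxE lift0_neq /= mulr0.
  by [].
have DE : forall i j, ((N - N *m E) i j = N i j - (N *m E) i j)%R.
  by move=> i j; rewrite [LHS]mxE [X in (_ + X)%R]mxE.
have -> : (\det N = \det (N *m (1%:M - E)))%R by rewrite det_mulmx detP mulr1.
rewrite mulmxBr mulmx1 (expand_det_col _ ord0) big_ord_recl big1 ?addr0.
- rewrite /cofactor DE NE0 /= expr0 mul1r rsumE RmultE !mxE.
  congr (_ * _)%R.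
  congr (determinant _); apply/matrixP => i j; rewrite !mxE.
  rewrite big1 ?subr0 ?lift0 // => k _; rewrite /E !mxE lift0_neq /= mulr0.
  by [].
- move=> i _; rewrite DE NE0 !mxE lift0.
  rewrite (_ : (\sum_(k<m) _)%R = M i.+1 O); first by rewrite subrr mul0r.
  rewrite -(rsumE m (fun k => M i.+1 k.+1 * w k)); apply: Hw; apply/ltP.
  by [].
Qed.

Definition rowv n (x : Vec) : 'rV[R]_n := (\row_j x j)%R.
Definition vrow n (y : 'rV[R]_n) : Vec := fun k => oapp (fun j => y 0%R j) 0 (insub k).
Arguments vrow {n}.

Lemma vrowE n (y : 'rV[R]_n) (j : 'I_n) : vrow y j = y 0%R j.
Proof. by rewrite /vrow valK. Qed.

Lemma rowv_vrow n (y : 'rV[R]_n) : rowv n (vrow y) = y.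
Proof. by apply/rowP => j; rewrite mxE vrowE. Qed.

Lemma quad_mx n N x : quad n N x = ((rowv n x *m mx n N *m (rowv n x)^T) 0 0)%R.
Proof.
rewrite /quad rsumE mxE.
under eq_bigr => i _ do rewrite rsumE.
rewrite exchange_big /=; apply: eq_bigr => j _.
rewrite !mxE mulr_suml; apply: eq_bigr => i _.
by rewrite !mxE.
Qed.

Lemma nz_row n (x : Vec) : (exists i, lt i n /\ x i <> 0) -> rowv n x != 0%R.
Proof.
move=> [i [Hi Hx]]; apply/rV0Pn.
have Hi' : (i < n)%N by apply/ltP.
exists (Ordinal Hi'); rewrite mxE /=; apply/eqP.
exact Hx.
Qed.
Arguments nz_row {n x}.


Lemma nz_vrow {n} (y : 'rV[R]_n) : y != 0%R -> exists i, lt i n /\ vrow y i <> 0.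
Proof.
move/rV0Pn => [j Hj]; exists j; split; first by apply/ltP.
by rewrite vrowE; apply/eqP.
Qed.

Lemma pd_unit n N : (forall x : Vec, (exists i, lt i n /\ x i <> 0) -> 0 < quad n N x) ->
  mx n N \in unitmx.
Proof.
move=> H; rewrite unitmxE unitfE; apply/negP => /det0P [v Hv HvN].
have := H (vrow v) (nz_vrow v Hv).
rewrite quad_mx rowv_vrow HvN mul0mx mxE.
exact: Rlt_irrefl.
Qed.

Lemma solve_pd m (N : Mat) (b : Vec) :
  (forall x : Vec, (exists i, lt i m /\ x i <> 0) -> 0 < quad m N x) ->
  exists w : Vec, forall i, lt i m -> rsum m (fun k => N i k * w k) = b i.
Proof.
move=> H; have U := pd_unit m N H.
pose wc : 'cV[R]_m := (invmx (mx m N) *m \col_i b i)%R.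
exists (vrow wc^T) => i Hi.
have Hi' : (i < m)%N by apply/ltP.
have := congr1 (fun M : 'cV[R]_m => M (Ordinal Hi') 0%R) (mulKVmx U (\col_i b i))%R.
rewrite !mxE /= => <-; rewrite rsumE; apply: eq_bigr => k _.
by rewrite vrowE !mxE.
Qed.

Lemma inv_mx n A Ainv : is_inverse n A Ainv -> (mx n A *m mx n Ainv = 1%:M)%R.
Proof.
move=> H; apply/matrixP => i j; rewrite !mxE.
have := H i j (ltP (ltn_ord i)) (ltP (ltn_ord j)); rewrite rsumE => HH.
rewrite (eq_bigr (fun k : 'I_n => A i k * Ainv k j)); last by move=> k _; rewrite !mxE.
rewrite HH.
case: (Nat.eqb_spec i j) => [/val_inj -> | Hne]; first by rewrite eqxx.
have -> : (i == j) = false by apply/negbTE/eqP => E; apply: Hne; rewrite E.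
by [].
Qed.
Arguments inv_mx {n A Ainv}.


Lemma inv_det n A Ainv : is_inverse n A Ainv -> det n A * det n Ainv = 1.
Proof. by move=> H; rewrite !det_mxE RmultE -det_mulmx inv_mx // det1. Qed.

Lemma sym_mx n A : (forall i j, lt i n -> lt j n -> A i j = A j i) -> ((mx n A)^T = mx n A)%R.
Proof. by move=> H; apply/matrixP => i j; rewrite !mxE H //; apply/ltP. Qed.
Arguments sym_mx {n A}.


Lemma inv_sym_mx n A Ainv : SPD n A -> is_inverse n A Ainv -> ((mx n Ainv)^T = mx n Ainv)%R.
Proof.
move=> [HS _] H.
have H1 := inv_mx H; have H2 := mulmx1C H1; have HT := sym_mx HS.
rewrite -[LHS]mulmx1 -H1 mulmxA -{1}HT -trmx_mul H1 trmx1 mul1mx.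
by [].
Qed.
Arguments inv_sym_mx {n A Ainv}.


Lemma inv_sym n A Ainv : SPD n A -> is_inverse n A Ainv ->
  forall i j, lt i n -> lt j n -> Ainv i j = Ainv j i.
Proof.
move=> HA H i j Hi Hj.
have := congr1 (fun M : 'M[R]_n => M (Ordinal (introT ltP Hi)) (Ordinal (introT ltP Hj))) (inv_sym_mx HA H).
by rewrite !mxE /= => ->.
Qed.

Lemma inv_pd n A Ainv : SPD n A -> is_inverse n A Ainv ->
  forall x : Vec, (exists i, lt i n /\ x i <> 0) -> 0 < quad n Ainv x.
Proof.
move=> HA H x Hx.
have H1 := inv_mx H; have H2 := mulmx1C H1; have HT := inv_sym_mx HA H.
set X := rowv n x.
set y := (X *m mx n Ainv)%R.
have Xy : (y *m mx n A = X)%R by rewrite /y -mulmxA H2 mulmx1.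
have yn : y != 0%R.
  apply/negP => /eqP y0; move: Xy; rewrite y0 mul0mx => X0.
  by move: (nz_row Hx); rewrite -/X -X0 eqxx.
have := proj2 HA (vrow y) (nz_vrow y yn).
rewrite !quad_mx rowv_vrow -/X.
have -> : (y *m mx n A *m y^T = X *m mx n Ainv *m X^T)%R; last by [].
rewrite Xy /y trmx_mul HT mulmxA.
by [].
Qed.

Lemma mx_add n A B : mx n (madd A B) = (mx n A + mx n B)%R.
Proof. by apply/matrixP => i j; rewrite !mxE. Qed.

Lemma det_add n A Ainv B Binv : is_inverse n A Ainv -> is_inverse n B Binv ->
  det n (madd A B) = det n A * det n B * det n (madd Ainv Binv).
Proof.
move=> HA HB; rewrite !det_mxE !mx_add.
have E : (mx n A *m (mx n Ainv + mx n Binv) *m mx n B = mx n A + mx n B)%R.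
  rewrite mulmxDr mulmxDl (inv_mx HA) mul1mx -mulmxA (mulmx1C (inv_mx HB)) mulmx1.
  by rewrite addrC.
rewrite -E !det_mulmx.
rewrite !RmultE; rewrite -mulrA (mulrC (\det (_ + _))%R) mulrA.
by [].
Qed.

Lemma det_scale n c A : det n (mscale c A) = c ^ n * det n A.
Proof.
rewrite !det_mxE RpowE RmultE -detZ; congr (determinant _).
by apply/matrixP => i j; rewrite !mxE.
Qed.
End LA.

Module AN.
From Coquelicot Require Import Coquelicot.

Lemma exp_le x y : x <= y -> exp x <= exp y.
Proof. intros [H|H]; [left; apply exp_increasing; auto| rewrite H; lra]. Qed.

Definition f0 (t : R) : R := exp (- / 2 * t ^ 2).

Lemma f0_cont t : continuous f0 t.
Proof. apply (ex_derive_continuous (K:=R_AbsRing) (V:=R_NormedModule)); unfold f0; auto_derive; auto. Qed.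

Lemma ex_f0 a b : ex_RInt f0 a b.
Proof. apply (ex_RInt_continuous (V:=R_CompleteNormedModule)); intros; apply f0_cont. Qed.

Lemma f0_pos t : 0 < f0 t.
Proof. apply exp_pos. Qed.

Lemma RInt_f0_ge0 a b : a <= b -> 0 <= RInt f0 a b.
Proof. intros H; apply RInt_ge_0; auto. apply ex_f0. intros; left; apply f0_pos. Qed.

Definition F (b : R) := RInt f0 0 b.

Lemma chas a b c : RInt f0 a b + RInt f0 b c = RInt f0 a c.
Proof. apply (RInt_Chasles (V:=R_CompleteNormedModule) f0); apply ex_f0. Qed.

Lemma tail x y : 1 <= x <= y -> RInt f0 x y <= 2 * exp (- x / 2).
Proof.
intros [H1 H2].
assert (HG : RInt (fun t => exp (-/2 * t)) x y = (-2 * exp (-/2 * y)) - (-2 * exp (-/2 * x))).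
{ apply (is_RInt_unique (V:=R_CompleteNormedModule)).
  apply (is_RInt_derive (V:=R_CompleteNormedModule) (fun t => -2 * exp (-/2 * t))).
  - intros t _; auto_derive; auto; field.
  - intros t _; apply (ex_derive_continuous (K:=R_AbsRing) (V:=R_NormedModule)); auto_derive; auto. }
apply Rle_trans with (RInt (fun t => exp (-/2 * t)) x y).
- apply RInt_le; auto. apply ex_f0.
  apply (ex_RInt_continuous (V:=R_CompleteNormedModule)); intros; apply (ex_derive_continuous (K:=R_AbsRing) (V:=R_NormedModule)); auto_derive; auto.
  intros t Ht; unfold f0; apply exp_le.
  simpl; nra.
- rewrite HG. assert (0 < exp (-/2*y)) by apply exp_pos.
  replace (- x / 2) with (-/2 * x) by field. lra.
Qed.

Lemma F_mono a b : a <= b -> F a <= F b.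
Proof.
intros H; unfold F; rewrite <- (chas 0 a b).
assert (0 <= RInt f0 a b) by (apply RInt_f0_ge0; auto). lra.
Qed.

Lemma F1_pos : 0 < F 1.
Proof.
unfold F.
apply Rlt_le_trans with (RInt (fun _ => exp (-/2)) 0 1).
- rewrite (RInt_const (V:=R_CompleteNormedModule)). unfold scal; simpl; unfold mult; simpl.
  assert (0 < exp (-/2)) by apply exp_pos. lra.
- apply RInt_le; try lra.
  apply ex_RInt_const. apply ex_f0.
  intros t Ht; unfold f0; apply exp_le; simpl; nra.
Qed.

Definition E y := exists b, 0 <= b /\ y = F b.

Lemma E_bound : bound E.
Proof.
exists (F 1 + 2); intros y [b [Hb ->]].
destruct (Rle_dec b 1) as [H|H].
- assert (F b <= F 1) by (apply F_mono; auto). lra.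
- unfold F; rewrite <- (chas 0 1 b).
  assert (RInt f0 1 b <= 2 * exp (- 1 / 2)) by (apply tail; lra).
  assert (exp (- 1 / 2) <= exp 0) by (apply exp_le; lra).
  rewrite exp_0 in *. fold (F 1). lra.
Qed.

Definition L : R := proj1_sig (completeness E E_bound (ex_intro _ (F 0) (ex_intro _ 0 (conj (Rle_refl 0) eq_refl)))).

Lemma L_lub : is_lub E L.
Proof. unfold L; destruct completeness; auto. Qed.

Lemma L_approx b : 1 <= b -> F b <= L /\ L - F b <= 2 * exp (- b / 2).
Proof.
intros Hb; destruct L_lub as [Hub Hl]; split.
- apply Hub; exists b; split; auto; lra.
- assert (L <= F b + 2 * exp (- b / 2)); [|lra].
  apply Hl; intros y [b' [Hb' ->]].
  destruct (Rle_dec b' b) as [H|H].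
  + assert (F b' <= F b) by (apply F_mono; auto).
    assert (0 < exp (- b / 2)) by apply exp_pos. lra.
  + unfold F; rewrite <- (chas 0 b b').
    assert (RInt f0 b b' <= 2 * exp (- b / 2)) by (apply tail; lra). lra.
Qed.

Lemma f0_sym a : RInt f0 a 0 = F (- a).
Proof.
unfold F.
assert (H := RInt_comp_lin (V:=R_CompleteNormedModule) f0 (-1) 0 a 0).
replace (-1 * a + 0) with (-a) in H by ring.
replace (-1 * 0 + 0) with 0 in H by ring.
rewrite <- (opp_RInt_swap (V:=R_CompleteNormedModule) f0 (-a) 0) by apply ex_f0.
rewrite <- H by apply ex_f0.
rewrite <- (RInt_opp (V:=R_CompleteNormedModule)).
2:{ apply (ex_RInt_continuous (V:=R_CompleteNormedModule)); intros; apply (ex_derive_continuous (K:=R_AbsRing) (V:=R_NormedModule)). unfold f0, scal; simpl; unfold mult; simpl. auto_derive. auto. }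
apply (RInt_ext (V:=R_CompleteNormedModule)); intros x _. unfold scal, opp; simpl; unfold mult; simpl.
unfold f0. replace ((-1 * x + 0) ^ 2) with (x ^ 2) by ring. ring.
Qed.

Definition K := 2 * L.

Lemma K_pos : 0 < K.
Proof.
unfold K; destruct L_lub as [Hub _].
assert (F 1 <= L) by (apply Hub; exists 1; split; auto; lra).
assert (HF := F1_pos). lra.
Qed.

Lemma f0_conv eps : 0 < eps -> exists M, forall a b, a <= - M -> M <= b ->
  Rabs (RInt f0 a b - K) < eps.
Proof.
intros He.
exists (Rmax 1 (2 * ln (4 / eps) + 2)).
intros a b Ha Hb.
set (M := Rmax 1 (2 * ln (4 / eps) + 2)) in *.
assert (HM1 : 1 <= M) by apply Rmax_l.
assert (HM2 : 2 * ln (4 / eps) + 2 <= M) by apply Rmax_r.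
rewrite <- (chas a 0 b), f0_sym.
destruct (L_approx (- a)) as [H1 H2]; [lra|].
destruct (L_approx b) as [H3 H4]; [lra|].
assert (exp (- (- a) / 2) <= exp (- M / 2)) by (apply exp_le; lra).
assert (exp (- b / 2) <= exp (- M / 2)) by (apply exp_le; lra).
assert (exp (- M / 2) < eps / 4).
{ apply Rle_lt_trans with (exp (- ln (4 / eps) - 1)).
  apply exp_le; lra.
  apply Rlt_le_trans with (exp (- ln (4 / eps))).
  apply exp_increasing; lra.
  rewrite exp_Ropp, exp_ln. right; field; lra.
  apply Rdiv_lt_0_compat; lra. }
fold (F b). unfold K.
replace (- - a / 2) with (- (- a) / 2) in * by ring.
unfold Rabs; destruct Rcase_abs; lra.
Qed.

Lemma improper_of_RInt f l : (forall a b, ex_RInt f a b) ->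
  (forall eps, 0 < eps -> exists M, forall a b, a <= - M -> M <= b -> Rabs (RInt f a b - l) < eps) ->
  improper_integral f l.
Proof.
intros Hex Hc; split.
- intros a b; constructor; apply ex_RInt_Reals_0; auto.
- intros eps He; destruct (Hc eps He) as [M HM]; exists M; intros a b Ha Hb pr.
  rewrite <- RInt_Reals; auto.
Qed.

Lemma gauss1 sg s0 C : 0 < sg ->
  improper_integral (fun t => C * exp (-/2 * (sg * (t - s0)^2))) (C * K / sqrt sg).
Proof.
intros Hs. set (q := sqrt sg).
assert (Hq : 0 < q) by (apply sqrt_lt_R0; auto).
assert (Hq2 : q * q = sg) by (apply sqrt_sqrt; lra).
assert (Hint : forall a b, RInt (fun t => C * exp (-/2 * (sg*(t-s0)^2))) a b
   = C / q * RInt f0 (q*a + -(q*s0)) (q*b + -(q*s0))).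
{ intros a b.
  rewrite <- (RInt_comp_lin (V:=R_CompleteNormedModule) f0 q (-(q*s0)) a b) by apply ex_f0.
  transitivity (scal (C / q) (RInt (fun y => scal q (f0 (q * y + - (q * s0)))) a b)); [|reflexivity].
  rewrite <- (RInt_scal (V:=R_CompleteNormedModule)).
  2:{ apply (ex_RInt_continuous (V:=R_CompleteNormedModule)); intros;
      apply (ex_derive_continuous (K:=R_AbsRing) (V:=R_NormedModule)).
      unfold f0, scal; simpl; unfold mult; simpl. auto_derive. auto. }
  apply (RInt_ext (V:=R_CompleteNormedModule)); intros x _.
  unfold scal; simpl; unfold mult; simpl; unfold f0.
  replace ((q * x + - (q * s0)) ^ 2) with (sg * (x - s0) ^ 2) by (rewrite <- Hq2; ring).
  replace ((x - s0) * ((x - s0) * 1)) with ((x - s0)^2) by ring.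
  field; lra. }
apply improper_of_RInt.
- intros a b; apply (ex_RInt_continuous (V:=R_CompleteNormedModule)); intros;
  apply (ex_derive_continuous (K:=R_AbsRing) (V:=R_NormedModule)); auto_derive; auto.
- intros eps He.
  assert (HC : 0 < Rabs C + 1) by (assert (0 <= Rabs C) by apply Rabs_pos; lra).
  destruct (f0_conv (eps * q / (Rabs C + 1))) as [M0 HM0].
  { apply Rdiv_lt_0_compat; auto; apply Rmult_lt_0_compat; auto. }
  exists (Rabs s0 + Rabs M0 / q); intros a b Ha Hb.
  rewrite Hint.
  assert (HA : q * a + - (q * s0) <= - M0).
  { assert (a - s0 <= - (Rabs M0 / q)).
    { assert (- Rabs s0 <= s0) by (unfold Rabs; destruct Rcase_abs; lra). lra. }
    assert (q * (a - s0) <= q * (- (Rabs M0 / q))) by (apply Rmult_le_compat_l; lra).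
    replace (q * (- (Rabs M0 / q))) with (- Rabs M0) in * by (field; lra).
    assert (M0 <= Rabs M0) by apply RRle_abs. lra. }
  assert (HB : M0 <= q * b + - (q * s0)).
  { assert (Rabs M0 / q <= b - s0).
    { assert (s0 <= Rabs s0) by apply RRle_abs. lra. }
    assert (q * (Rabs M0 / q) <= q * (b - s0)) by (apply Rmult_le_compat_l; lra).
    replace (q * (Rabs M0 / q)) with (Rabs M0) in * by (field; lra).
    assert (M0 <= Rabs M0) by apply RRle_abs. lra. }
  specialize (HM0 _ _ HA HB).
  set (I := RInt f0 (q * a + - (q * s0)) (q * b + - (q * s0))) in *.
  replace (C / q * I - C * K / q) with (C / q * (I - K)) by (field; lra).
  rewrite Rabs_mult, Rabs_div by lra. rewrite (Rabs_right q) by lra.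
  assert (0 <= Rabs C) by apply Rabs_pos.
  assert (Rabs C / q * Rabs (I - K) <= Rabs C / q * (eps * q / (Rabs C + 1))).
  { apply Rmult_le_compat_l. apply Rdiv_le_0_compat; lra. lra. }
  apply Rle_lt_trans with (Rabs C / q * (eps * q / (Rabs C + 1))); auto.
  replace (Rabs C / q * (eps * q / (Rabs C + 1))) with (eps * (Rabs C / (Rabs C + 1))) by (field; lra).
  assert (Rabs C / (Rabs C + 1) < 1).
  { apply (Rmult_lt_reg_r (Rabs C + 1)); auto. unfold Rdiv. rewrite Rmult_assoc, Rinv_l by lra. lra. }
  nra.
Qed.
End AN.


Lemma rsum_ext n f g : (forall i, (i < n)%nat -> f i = g i) -> rsum n f = rsum n g.
Proof.
induction n as [|n IH]; intros H; simpl; auto.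
rewrite IH, (H n); auto; intros; apply H; lia.
Qed.

Lemma rsum_plus n f g : rsum n (fun i => f i + g i) = rsum n f + rsum n g.
Proof. induction n; simpl; [lra| rewrite IHn; lra]. Qed.

Lemma rsum_scal n c f : rsum n (fun i => c * f i) = c * rsum n f.
Proof. induction n; simpl; [lra| rewrite IHn; lra]. Qed.

Lemma rsum_0 n : rsum n (fun _ => 0) = 0.
Proof. induction n; simpl; [lra| rewrite IHn; lra]. Qed.

Lemma rsum_shift n f : rsum (S n) f = f O + rsum n (fun i => f (S i)).
Proof.
induction n as [|n IH]; simpl; [lra|].
simpl in IH; rewrite IH; lra.
Qed.

Lemma rsum_swap n m F :
  rsum n (fun i => rsum m (fun j => F i j)) = rsum m (fun j => rsum n (fun i => F i j)).
Proof.
induction n as [|n IH]; simpl.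
- rewrite rsum_0; auto.
- rewrite IH, <- rsum_plus; auto.
Qed.

Lemma quad_add n A B x : quad n (madd A B) x = quad n A x + quad n B x.
Proof.
unfold quad, madd; rewrite <- rsum_plus; apply rsum_ext; intros i _.
rewrite <- rsum_plus; apply rsum_ext; intros j _; ring.
Qed.

Lemma quad_scale n c A x : quad n (mscale c A) x = c * quad n A x.
Proof.
unfold quad, mscale; rewrite <- rsum_scal; apply rsum_ext; intros i _.
rewrite <- rsum_scal; apply rsum_ext; intros j _; ring.
Qed.

Lemma quad_zero n A : quad n A (fun _ => 0) = 0.
Proof.
unfold quad; transitivity (rsum n (fun _ => 0)); [|apply rsum_0].
apply rsum_ext; intros i _; transitivity (rsum n (fun _ => 0)); [|apply rsum_0].
apply rsum_ext; intros; ring.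
Qed.

Definition subM (M : Mat) : Mat := fun i j => M (S i) (S j).

Lemma QE1 m M u v : (forall i j, (i < S m)%nat -> (j < S m)%nat -> M i j = M j i) ->
  quad (S m) M (vcons u v) =
  M O O * u^2 + 2 * u * rsum m (fun k => M O (S k) * v k) + quad m (subM M) v.
Proof.
intros HS; unfold quad; rewrite rsum_shift; simpl vcons.
rewrite rsum_shift; simpl vcons.
rewrite (rsum_ext m (fun i => rsum (S m) (fun j => v i * M (S i) j * vcons u v j))
   (fun i => v i * M (S i) O * u + rsum m (fun j => v i * subM M i j * v j))).
2:{ intros i _; rewrite rsum_shift; reflexivity. }
rewrite rsum_plus.
rewrite (rsum_ext m (fun i => v i * M (S i) O * u) (fun i => u * (M O (S i) * v i))).
2:{ intros i Hi; rewrite (HS (S i) O) by lia; ring. }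
rewrite (rsum_ext m (fun j => u * M O (S j) * v j) (fun j => u * (M O (S j) * v j))).
2:{ intros; ring. }
rewrite !rsum_scal; ring.
Qed.

Lemma QE2 m N u v w : (forall i j, (i < m)%nat -> (j < m)%nat -> N i j = N j i) ->
  quad m N (fun k => v k + u * w k) =
  quad m N v + 2 * u * rsum m (fun i => v i * rsum m (fun k => N i k * w k))
  + u^2 * rsum m (fun i => w i * rsum m (fun k => N i k * w k)).
Proof.
intros HS; unfold quad.
rewrite (rsum_ext m _ (fun i => rsum m (fun j => v i * N i j * v j)
   + u * (v i * rsum m (fun k => N i k * w k))
   + rsum m (fun j => u * (w i * N i j * v j))
   + u^2 * (w i * rsum m (fun k => N i k * w k)))).
2:{ intros i _.
    rewrite <- !rsum_scal, <- !rsum_plus. apply rsum_ext; intros j _.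
    ring. }
rewrite !rsum_plus, !rsum_scal, (rsum_swap m m (fun i j => u * (w i * N i j * v j))).
rewrite (rsum_ext m (fun j => rsum m (fun i => u * (w i * N i j * v j)))
   (fun j => u * (v j * rsum m (fun k => N j k * w k)))).
2:{ intros j Hj. rewrite <- !rsum_scal; apply rsum_ext; intros i Hi.
    rewrite (HS i j) by lia; ring. }
rewrite rsum_scal; ring.
Qed.

Lemma quad_split m M w u v :
  (forall i j, (i < S m)%nat -> (j < S m)%nat -> M i j = M j i) ->
  (forall i, (i < m)%nat -> rsum m (fun k => M (S i) (S k) * w k) = M (S i) O) ->
  quad (S m) M (vcons u v) =
  quad m (subM M) (fun k => v k + u * w k) + (M O O - rsum m (fun k => M O (S k) * w k)) * u^2.
Proof.
intros HS Hw.
rewrite QE1 by auto.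
rewrite QE2.
2:{ intros i j Hi Hj; unfold subM; apply HS; lia. }
unfold subM.
rewrite (rsum_ext m (fun i => v i * rsum m (fun k => M (S i) (S k) * w k))
   (fun k => M O (S k) * v k)).
2:{ intros i Hi; rewrite Hw, (HS (S i) O) by lia; ring. }
rewrite (rsum_ext m (fun i => w i * rsum m (fun k => M (S i) (S k) * w k))
   (fun k => M O (S k) * w k)).
2:{ intros i Hi; rewrite Hw, (HS (S i) O) by lia; ring. }
ring.
Qed.

Lemma integral_ext m F G l : (forall x, F x = G x) -> integral_Rn m F l -> integral_Rn m G l.
Proof.
intros H; replace G with F; auto. apply functional_extensionality; auto.
Qed.

Lemma sub_SPD m M : SPD (S m) M -> SPD m (subM M).
Proof.
intros [HS HP]; split.
- intros i j Hi Hj; unfold subM; apply HS; lia.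
- intros y [i [Hi Hy]].
  assert (H := HP (vcons 0 y) (ex_intro _ (S i) (conj (proj1 (Nat.succ_lt_mono i m) Hi) Hy))).
  rewrite QE1 in H by auto. lra.
Qed.

Lemma sigma_pos m M w : SPD (S m) M ->
  (forall i, (i < m)%nat -> rsum m (fun k => M (S i) (S k) * w k) = M (S i) O) ->
  0 < M O O - rsum m (fun k => M O (S k) * w k).
Proof.
intros [HS HP] Hw.
assert (H := HP (vcons 1 (fun k => - w k)) (ex_intro _ O (conj (Nat.lt_0_succ m) R1_neq_R0))).
rewrite (quad_split m M w) in H by auto.
replace (fun k => - w k + 1 * w k) with (fun _ : nat => 0) in H
  by (apply functional_extensionality; intros; ring).
rewrite quad_zero in H. lra.
Qed.

Lemma schur_data m M : SPD (S m) M -> exists w : Vec,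
  (forall i, (i < m)%nat -> rsum m (fun k => M (S i) (S k) * w k) = M (S i) O) /\
  det (S m) M = (M O O - rsum m (fun k => M O (S k) * w k)) * det m (subM M).
Proof.
intros HM.
destruct (sub_SPD m M HM) as [_ HP'].
destruct (LA.solve_pd m (subM M) (fun i => M (S i) O) HP') as [w Hw].
exists w; split; auto.
apply LA.schur_mx; auto.
Qed.

Lemma det_pos m : forall M, SPD m M -> 0 < det m M.
Proof.
induction m as [|m IH]; intros M HM.
- simpl; lra.
- destruct (schur_data m M HM) as [w [Hw Hd]].
  rewrite Hd. apply Rmult_lt_0_compat.
  + apply (sigma_pos m M w); auto.
  + apply IH, sub_SPD; auto.
Qed.

Lemma gaussN m : forall M s C, SPD m M ->
  integral_Rn m (fun x => C * exp (-/2 * quad m M (fun i => x i - s i)))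
    (C * AN.K ^ m / sqrt (det m M)).
Proof.
induction m as [|m IH]; intros M s C HM.
- simpl. unfold quad; simpl. rewrite sqrt_1. replace (-/2 * 0) with 0 by ring.
  rewrite exp_0. field.
- destruct (schur_data m M HM) as [w [Hw Hd]].
  set (sg := M O O - rsum m (fun k => M O (S k) * w k)) in *.
  assert (Hsg : 0 < sg) by (apply (sigma_pos m M w); auto).
  assert (HM' := sub_SPD m M HM).
  assert (Hd' : 0 < det m (subM M)) by (apply det_pos; auto).
  assert (Hsq : 0 < sqrt (det m (subM M))) by (apply sqrt_lt_R0; auto).
  assert (Hsq2 : 0 < sqrt sg) by (apply sqrt_lt_R0; auto).
  exists (fun t => (C * AN.K ^ m / sqrt (det m (subM M))) * exp (-/2 * (sg * (t - s O)^2))).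
  split.
  + intro t.
    set (e := exp (-/2 * (sg * (t - s O)^2))).
    apply integral_ext with (F := fun y => (C * e) *
       exp (-/2 * quad m (subM M) (fun i => y i - (s (S i) - (t - s O) * w i)))).
    * intro y.
      replace (fun i => vcons t y i - s i) with (vcons (t - s O) (fun k => y k - s (S k)))
        by (apply functional_extensionality; intros [|i]; reflexivity).
      rewrite (quad_split m M w) by (destruct HM; auto).
      replace (fun k => y k - s (S k) + (t - s O) * w k)
        with (fun i => y i - (s (S i) - (t - s O) * w i))
        by (apply functional_extensionality; intros; ring).
      fold sg. unfold e.
      rewrite Rmult_assoc, <- exp_plus. f_equal. f_equal. ring.
    * replace (C * AN.K ^ m / sqrt (det m (subM M)) * e)
        with (C * e * AN.K ^ m / sqrt (det m (subM M))) by (field; lra).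
      apply IH; auto.
  + rewrite Hd, sqrt_mult by lra.
    replace (C * AN.K ^ S m / (sqrt sg * sqrt (det m (subM M))))
      with (C * AN.K ^ m / sqrt (det m (subM M)) * AN.K / sqrt sg)
      by (simpl; field; lra).
    apply AN.gauss1; auto.
Qed.

Lemma inv_SPD n A Ainv : SPD n A -> is_inverse n A Ainv -> SPD n Ainv.
Proof.
intros HA H; split.
- apply (LA.inv_sym n A); auto.
- apply (LA.inv_pd n A); auto.
Qed.

Lemma scale_SPD n c A : 0 < c -> SPD n A -> SPD n (mscale c A).
Proof.
intros Hc [HS HP]; split.
- intros i j Hi Hj; unfold mscale; rewrite HS; auto.
- intros x Hx; rewrite quad_scale; specialize (HP x Hx); nra.
Qed.

Lemma add_SPD n A B : SPD n A -> SPD n B -> SPD n (madd A B).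
Proof.
intros [HSA HPA] [HSB HPB]; split.
- intros i j Hi Hj; unfold madd; rewrite HSA, HSB; auto.
- intros x Hx; rewrite quad_add; specialize (HPA x Hx); specialize (HPB x Hx); lra.
Qed.

Lemma sub0 (x : Vec) : (fun i => x i - 0) = x.
Proof. apply functional_extensionality; intros; ring. Qed.

Theorem proposition2 (n : nat) (A Ainv B Binv : Mat) :
  (1 <= n)%nat -> SPD n A -> SPD n B ->
  is_inverse n A Ainv -> is_inverse n B Binv ->
  exists NA NB ip : R,
    (* NA = ||f_A||_{L^2}^2, NB = ||f_B||_{L^2}^2 *)
    integral_Rn n (fun x => gauss n A Ainv x ^ 2) NA /\ 0 < NA /\
    integral_Rn n (fun x => gauss n B Binv x ^ 2) NB /\ 0 < NB /\
    (* ip = < Phi(A), Phi(B) >_{L^2} *)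
    integral_Rn n (fun x => (gauss n A Ainv x / sqrt NA) *
                            (gauss n B Binv x / sqrt NB)) ip /\
    ip <> 0 /\
    stein n (mscale 2 A) (mscale 2 B) = dS_of_inner ip.
Proof.
intros Hn HA HB HAi HBi.
assert (SAi := inv_SPD n A Ainv HA HAi).
assert (SBi := inv_SPD n B Binv HB HBi).
assert (dA := det_pos n A HA). assert (dB := det_pos n B HB).
assert (dAi := det_pos n Ainv SAi). assert (dBi := det_pos n Binv SBi).
assert (SS := add_SPD n Ainv Binv SAi SBi).
assert (dS := det_pos n _ SS).
assert (HK := AN.K_pos).
assert (Hk : 0 < AN.K ^ n) by (apply pow_lt; auto).
assert (Ht : 0 < 2 ^ n) by (apply pow_lt; lra).
assert (HPI : 0 < 2 * PI) by (assert (H := PI_RGT_0); lra).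
assert (HpA : 0 < (2 * PI) ^ n * det n A) by (apply Rmult_lt_0_compat; auto; apply pow_lt; auto).
assert (HpB : 0 < (2 * PI) ^ n * det n B) by (apply Rmult_lt_0_compat; auto; apply pow_lt; auto).
set (pA := (2 * PI) ^ n * det n A) in *.
set (pB := (2 * PI) ^ n * det n B) in *.
assert (SA2 := scale_SPD n 2 Ainv ltac:(lra) SAi).
assert (SB2 := scale_SPD n 2 Binv ltac:(lra) SBi).
assert (duA : 0 < sqrt (det n (mscale 2 Ainv))) by (apply sqrt_lt_R0, det_pos; auto).
assert (duB : 0 < sqrt (det n (mscale 2 Binv))) by (apply sqrt_lt_R0, det_pos; auto).
set (uA := sqrt (det n (mscale 2 Ainv))) in *.
set (uB := sqrt (det n (mscale 2 Binv))) in *.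
set (NA := / pA * AN.K ^ n / uA).
set (NB := / pB * AN.K ^ n / uB).
assert (HNA : 0 < NA) by (unfold NA; apply Rdiv_lt_0_compat; auto; apply Rmult_lt_0_compat; auto; apply Rinv_0_lt_compat; auto).
assert (HNB : 0 < NB) by (unfold NB; apply Rdiv_lt_0_compat; auto; apply Rmult_lt_0_compat; auto; apply Rinv_0_lt_compat; auto).
assert (sA := sqrt_lt_R0 _ HpA). assert (sB := sqrt_lt_R0 _ HpB).
assert (sNA := sqrt_lt_R0 _ HNA). assert (sNB := sqrt_lt_R0 _ HNB).
assert (sS := sqrt_lt_R0 _ dS).
set (C3 := / (sqrt pA * sqrt NA * sqrt pB * sqrt NB)).
set (ip := C3 * AN.K ^ n / sqrt (det n (madd Ainv Binv))).
exists NA, NB, ip.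
assert (EA : forall x, gauss n A Ainv x ^ 2 = / pA * exp (-/2 * quad n (mscale 2 Ainv) x)).
{ intro x; unfold gauss; fold pA. rewrite quad_scale.
  replace (-/2 * (2 * quad n Ainv x)) with (-/2 * quad n Ainv x + -/2 * quad n Ainv x) by field.
  rewrite exp_plus. replace (/ pA) with (/ (sqrt pA * sqrt pA)) by (rewrite sqrt_sqrt; lra).
  field. lra. }
assert (EB : forall x, gauss n B Binv x ^ 2 = / pB * exp (-/2 * quad n (mscale 2 Binv) x)).
{ intro x; unfold gauss; fold pB. rewrite quad_scale.
  replace (-/2 * (2 * quad n Binv x)) with (-/2 * quad n Binv x + -/2 * quad n Binv x) by field.
  rewrite exp_plus. replace (/ pB) with (/ (sqrt pB * sqrt pB)) by (rewrite sqrt_sqrt; lra).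
  field. lra. }
assert (Hip : 0 < ip).
{ unfold ip, C3. apply Rdiv_lt_0_compat; auto. apply Rmult_lt_0_compat; auto.
  apply Rinv_0_lt_compat. repeat apply Rmult_lt_0_compat; auto. }
split; [|split; [auto|split; [|split; [auto|split; [|split]]]]].
- apply integral_ext with (F := fun x => / pA * exp (-/2 * quad n (mscale 2 Ainv) (fun i => x i - (fun _ => 0) i))).
  { intro x; rewrite EA, sub0; auto. }
  apply gaussN; auto.
- apply integral_ext with (F := fun x => / pB * exp (-/2 * quad n (mscale 2 Binv) (fun i => x i - (fun _ => 0) i))).
  { intro x; rewrite EB, sub0; auto. }
  apply gaussN; auto.
- apply integral_ext with (F := fun x => C3 * exp (-/2 * quad n (madd Ainv Binv) (fun i => x i - (fun _ => 0) i))).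
  { intro x; rewrite sub0, quad_add. unfold gauss; fold pA pB. unfold C3.
    replace (-/2 * (quad n Ainv x + quad n Binv x)) with (-/2 * quad n Ainv x + -/2 * quad n Binv x) by ring.
    rewrite exp_plus. field. repeat split; lra. }
  apply gaussN; auto.
- lra.
- unfold stein, dS_of_inner. f_equal.
  replace (mscale (/2) (madd (mscale 2 A) (mscale 2 B))) with (madd A B)
    by (apply functional_extensionality; intro i; apply functional_extensionality; intro j;
        unfold mscale, madd; field).
  rewrite (LA.det_add n A Ainv B Binv HAi HBi), !LA.det_scale.
  set (s := det n (madd Ainv Binv)) in *.
  assert (HuA : uA * uA = 2 ^ n * det n Ainv) by (unfold uA; rewrite sqrt_sqrt; [apply LA.det_scale | rewrite LA.det_scale; nra]).
  assert (HuB : uB * uB = 2 ^ n * det n Binv) by (unfold uB; rewrite sqrt_sqrt; [apply LA.det_scale | rewrite LA.det_scale; nra]).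
  assert (Hip2 : ip ^ 2 = uA * uB / s).
  { unfold ip, C3.
    replace ((/ (sqrt pA * sqrt NA * sqrt pB * sqrt NB) * AN.K ^ n / sqrt s) ^ 2) with
      ((AN.K ^ n) ^ 2 / ((sqrt pA * sqrt pA) * (sqrt NA * sqrt NA) * (sqrt pB * sqrt pB)
          * (sqrt NB * sqrt NB) * (sqrt s * sqrt s))) by (field; repeat split; lra).
    rewrite !sqrt_sqrt by lra. unfold NA, NB. field; repeat split; lra. }
  assert (HX : 0 < ip ^ 2) by (apply pow_lt; auto).
  assert (HXX : ip ^ 2 * ip ^ 2 = (2 ^ n * det n Ainv) * (2 ^ n * det n Binv) * / (s * s)).
  { rewrite Hip2. rewrite <- HuA, <- HuB. field. lra. }
  assert (L1 : ln (ip ^ 2 * ip ^ 2) = ln (ip ^ 2) + ln (ip ^ 2)) by (apply ln_mult; auto).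
  rewrite HXX in L1.
  assert (HiA := LA.inv_det n A Ainv HAi). assert (HiB := LA.inv_det n B Binv HBi).
  assert (LA1 : ln (det n A * det n Ainv) = ln (det n A) + ln (det n Ainv)) by (apply ln_mult; auto).
  assert (LB1 : ln (det n B * det n Binv) = ln (det n B) + ln (det n Binv)) by (apply ln_mult; auto).
  rewrite HiA, ln_1 in LA1. rewrite HiB, ln_1 in LB1.
  assert (Hss : 0 < s * s) by nra.
  assert (P1 : 0 < 2 ^ n * det n Ainv) by (apply Rmult_lt_0_compat; auto).
  assert (P2 : 0 < 2 ^ n * det n Binv) by (apply Rmult_lt_0_compat; auto).
  assert (P12 : 0 < 2 ^ n * det n Ainv * (2 ^ n * det n Binv)) by (apply Rmult_lt_0_compat; auto).
  assert (Pi : 0 < / (s * s)) by (apply Rinv_0_lt_compat; auto).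
  rewrite (ln_mult _ _ P12 Pi), (ln_mult _ _ P1 P2), (ln_mult _ _ Ht dAi), (ln_mult _ _ Ht dBi),
    (ln_Rinv _ Hss), (ln_mult _ _ dS dS) in L1.
  assert (Q1 : 0 < det n A * det n B) by (apply Rmult_lt_0_compat; auto).
  assert (Q2 : 0 < 2 ^ n * det n A) by (apply Rmult_lt_0_compat; auto).
  assert (Q3 : 0 < 2 ^ n * det n B) by (apply Rmult_lt_0_compat; auto).
  rewrite (ln_mult _ _ Q1 dS), (ln_mult _ _ dA dB), (ln_mult _ _ Q2 Q3), (ln_mult _ _ Ht dA), (ln_mult _ _ Ht dB).
  lra.
Qed.
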